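(* Let $n\ge1$. For an anticommutative pure basic sequence $\mathbf e$ of length $n$ in a signed group, let $s_+$ (resp. $s_-$) be the number of negative elements among $\{\mathbf e^{\mathbf p}:\mathbf p\in\{0,1\}^n\}$ when $\mathbf e$ is positive (resp. negative). Then: (1) $s_-=s_+$ if and only if $4\mid n$; in this case every pure anticommutative generator of length $n$ admits a replacement which is a pure anticommutative generator of the opposite signature. (2) $s_+=2^{n-1}-2^{n/2-1}\big(\cos\frac{n\pi}{4}+\sin\frac{n\pi}{4}\big)$ and $s_-=2^{n-1}-2^{n/2-1}\big(\cos\frac{n\pi}{4}-\sin\frac{n\pi}{4}\big)$.
   Context: A signed group is a group containing a central element $-1\neq1$ with $(-1)^2=1$ such that any two elements either commute or anticommute ($ef=-fe$) and each element $e$ has signature $e^2\in\{\pm1\}$ (positive if $e^2=1$, negative if $e^2=-1$); a sequence is pure if all its elements have the same signature (positive or negative). For $\mathbf p\in\{0,1\}^n$, $\mathbf e^{\mathbf p}=e_1^{p_1}\cdots e_n^{p_n}$. A sequence is basic if no $\mathbf e^{\mathbf p}$ with $\mathbf p\neq\mathbf0$ equals $\pm1$; a generator is a basic sequence, generating the group $\{\pm\mathbf e^{\mathbf p}\}$, and a replacement of a generator is another generator generating the same group. Anticommutative means any two distinct terms anticommute. *)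

(* Defs.v *)
From mathcomp Require Import all_boot.
From Stdlib Require Import Reals.

Set Implicit Arguments.
Unset Strict Implicit.
Unset Printing Implicit Defensive.

Section SignedGroup.
Variable G : groupType.

Definition gmul : G -> G -> G := @mul G.
Definition gone : G := @one G.

Record signed_group (m : G) : Prop := SignedGroup {
  sg_neq1 : m <> gone;
  sg_sq : gmul m m = gone;
  sg_central : forall x, gmul m x = gmul x m;
  sg_comm : forall x y, gmul x y = gmul y x \/ gmul x y = gmul m (gmul y x);
  sg_signature : forall x, gmul x x = gone \/ gmul x x = m
}.

Definition positive_elt (x : G) : Prop := gmul x x = gone.
Definition negative_elt (m x : G) : Prop := gmul x x = m.

Definition emon (n : nat) (e : 'I_n -> G) (p : {ffun 'I_n -> bool}) : G :=
  \big[gmul/gone]_(i < n) (if p i then e i else gone).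

Definition positive_seq (n : nat) (e : 'I_n -> G) : Prop :=
  forall i, positive_elt (e i).
Definition negative_seq (m : G) (n : nat) (e : 'I_n -> G) : Prop :=
  forall i, negative_elt m (e i).
Definition pure_seq (m : G) (n : nat) (e : 'I_n -> G) : Prop :=
  positive_seq e \/ negative_seq m e.

Definition anticommutative (m : G) (n : nat) (e : 'I_n -> G) : Prop :=
  forall i j : 'I_n, i != j -> gmul (e i) (e j) = gmul m (gmul (e j) (e i)).

Definition basic (m : G) (n : nat) (e : 'I_n -> G) : Prop :=
  forall p : {ffun 'I_n -> bool}, p != [ffun=> false] ->
    emon e p <> gone /\ emon e p <> m.

Definition generated (m : G) (n : nat) (e : 'I_n -> G) (x : G) : Prop :=
  exists p, x = emon e p \/ x = gmul m (emon e p).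

Definition same_generated (m : G) (n k : nat) (e : 'I_n -> G) (f : 'I_k -> G)
  : Prop := forall x, generated m e x <-> generated m f x.

Definition num_neg (m : G) (n : nat) (e : 'I_n -> G) : nat :=
  #|[set p : {ffun 'I_n -> bool} | gmul (emon e p) (emon e p) == m]|.

End SignedGroup.

(* Main.v *)
Require Import Defs.
From mathcomp Require Import all_boot zify.

Set Implicit Arguments.
Unset Strict Implicit.
Unset Printing Implicit Defensive.

Section Grp.
Variable G : groupType.
Variable m : G.
Hypothesis sg : signed_group m.
Local Notation "x * y" := (@mul G x y).
Local Notation "1" := (@one G).

Lemma mm : m * m = 1. Proof. exact: (sg_sq sg). Qed.
Lemma mC x : m * x = x * m. Proof. exact: (sg_central sg). Qed.
Lemma mmK x : m * (m * x) = x. Proof. by rewrite mulgA mm mul1g. Qed.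

Definition mp (k : nat) : G := if odd k then m else 1.
Lemma mpD a b : mp (a + b) = mp a * mp b.
Proof. by rewrite /mp oddD; case: (odd a); case: (odd b); rewrite /= ?mul1g ?mulg1 ?mm. Qed.
Lemma mpC k x : mp k * x = x * mp k.
Proof. by rewrite /mp; case: (odd k); rewrite ?mC ?mul1g ?mulg1. Qed.
Lemma mpS k : mp k.+1 = m * mp k.
Proof. by rewrite /mp /=; case: (odd k); rewrite /= ?mm ?mulg1. Qed.
Lemma mpK k x : mp k * (mp k * x) = x.
Proof. by rewrite mulgA -mpD addnn /mp odd_double mul1g. Qed.

Definition sim x y := x = y \/ x = m * y.
Lemma sim_refl x : sim x x. Proof. by left. Qed.
Lemma sim_sym x y : sim x y -> sim y x.
Proof. by case=> ->; [left|right; rewrite mmK]. Qed.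
Lemma sim_trans x y z : sim x y -> sim y z -> sim x z.
Proof.
case=> ->; case=> ->; try by [left|right].
by left; rewrite mmK.
Qed.
Lemma simMl z x y : sim x y -> sim (z * x) (z * y).
Proof. by case=> ->; [left|right; rewrite mulgA -mC mulgA]. Qed.
Lemma simMr z x y : sim x y -> sim (x * z) (y * z).
Proof. by case=> ->; [left|right; rewrite mulgA]. Qed.
Lemma sim_comm x y : sim (x * y) (y * x).
Proof. by case: (sg_comm sg x y); rewrite /gmul => ->; [left|right]. Qed.
Lemma sim_sq x : sim (x * x) 1.
Proof. by case: (sg_signature sg x); rewrite /gmul => ->; [left|right; rewrite mulg1]. Qed.
Lemma sim_m x : sim (m * x) x. Proof. by right. Qed.
Lemma sim_mp k x : sim (mp k * x) x.
Proof. by rewrite /mp; case: (odd k); [right|left; rewrite mul1g]. Qed.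

Lemma sim_not01 x y : sim x y -> y <> 1 -> y <> m -> x <> 1 /\ x <> m.
Proof.
move=> [->|->] y1 ym; first by [].
split=> h.
  by apply: ym; rewrite -(mmK y) h mulg1.
by apply: y1; rewrite -(mmK y) h mm.
Qed.

Variable n : nat.
Variable e : 'I_n -> G.
Local Notation U := (index_enum 'I_n).

Definition PL (s : seq 'I_n) (q : 'I_n -> bool) : G :=
  \big[@mul G/1]_(i <- s) (if q i then e i else 1).

Lemma PL_ext s q q' : (forall j, j \in s -> q j = q' j) -> PL s q = PL s q'.
Proof. by move=> h; apply: eq_big_seq => j /h ->. Qed.

Lemma emonE (p : {ffun 'I_n -> bool}) : emon e p = PL U p.
Proof. by []. Qed.

Lemma PL_sim_ext s q q' : (forall j, q j = q' j) -> sim (PL s q) (PL s q').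
Proof. by move=> h; rewrite (@PL_ext s q q'); [apply: sim_refl|move=> j _; apply: h]. Qed.

Definition flip (a : 'I_n) (q : 'I_n -> bool) := fun j => q j (+) (j == a).

Lemma sim_flip s a q : uniq s -> a \in s ->
  sim (e a * PL s q) (PL s (flip a q)).
Proof.
elim: s => // b s IH /= /andP [bs us]; rewrite inE /PL !big_cons.
case: (eqVneq a b) => [eab|ne] /=; first (subst b; move=> _).
  have -> : \big[@mul G/1]_(i <- s) (if flip a q i then e i else 1)
          = \big[@mul G/1]_(i <- s) (if q i then e i else 1).
    apply: eq_big_seq => j js; rewrite /flip; case: eqP => [ja|_]; last by rewrite addbF.
    by move: bs; rewrite -ja js.
  rewrite /flip eqxx; case: (q a) => /=.
    rewrite mulgA; apply: sim_trans (simMr _ (sim_sq _)) _; rewrite mul1g; exact: sim_refl.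
  by rewrite mul1g; apply: sim_refl.
move=> as_; rewrite /= in as_; have -> : flip a q b = q b by rewrite /flip eq_sym (negbTE ne) addbF.
apply: (@sim_trans _ ((if q b then e b else 1) * (e a * PL s q))).
  rewrite !mulgA; apply: simMr; case: (q b); first exact: sim_comm.
  by rewrite mul1g mulg1; apply: sim_refl.
exact: simMl (IH us as_).
Qed.

Lemma PL_false s : PL s (fun _ => false) = 1.
Proof. by rewrite /PL big1_seq. Qed.

Lemma sim_prod s v w : uniq s ->
  sim (PL s v * PL U w) (PL U (fun j => w j (+) (v j && (j \in s)))).
Proof.
elim: s => [|b s IH] /=.
  move=> _; rewrite /PL big_nil mul1g -/(PL U w) -/(PL U _).
  rewrite (@PL_ext U _ w); first exact: sim_refl.
  by move=> j _; rewrite in_nil andbF addbF.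
move=> /andP [bs us].
rewrite {1}/PL big_cons -mulgA -/(PL s v).
apply: sim_trans (simMl _ (IH us)) _.
case vb: (v b).
  apply: sim_trans (sim_flip _ (index_enum_uniq _) (mem_index_enum b)) _.
  apply: PL_sim_ext => j; rewrite /flip inE; case: (eqVneq j b) => [->|ne].
    by rewrite (negbTE bs) vb andbF /= addbF.
  by rewrite /= addbF.
rewrite mul1g; apply: PL_sim_ext => j; rewrite inE; case: (eqVneq j b) => [->|ne].
  by rewrite (negbTE bs) vb.
by [].
Qed.

Definition rep x (v : 'I_n -> bool) := sim x (PL U v).

Lemma rep_mul x y v w : rep x v -> rep y w -> rep (x * y) (fun j => v j (+) w j).
Proof.
move=> hx hy; rewrite /rep.
apply: sim_trans (simMr _ hx) _; apply: sim_trans (simMl _ hy) _.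
apply: sim_trans (sim_prod _ _ (index_enum_uniq _)) _.
apply: PL_sim_ext => j.
by rewrite mem_index_enum andbT addbC.
Qed.

Lemma rep_e i : rep (e i) (fun j => j == i).
Proof.
rewrite /rep; apply: sim_sym.
have := sim_flip (fun _ => false) (index_enum_uniq _) (mem_index_enum i).
rewrite PL_false mulg1 => h; apply: sim_trans _ (sim_sym h).
by apply: PL_sim_ext.
Qed.

Lemma rep_sim x y v : sim x y -> rep y v -> rep x v.
Proof. by move=> h1 h2; apply: sim_trans h1 h2. Qed.

Lemma rep_ext x v w : (forall j, v j = w j) -> rep x v -> rep x w.
Proof. by move=> h; rewrite /rep (@PL_ext U v w) // => j _; apply: h. Qed.

Definition Pr (s : seq 'I_n) : G := \big[@mul G/1]_(i <- s) e i.

Lemma PL_Pr s q : PL s q = Pr (filter q s).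
Proof. by rewrite /PL /Pr big_filter [RHS]big_mkcond. Qed.

Hypothesis anti : anticommutative m e.

Lemma anti_C a s : e a * Pr s = mp (count (fun b => b != a) s) * (Pr s * e a).
Proof.
elim: s => [|b s IH]; first by rewrite /Pr big_nil mulg1 mul1g /mp /= mul1g.
rewrite /Pr big_cons -/(Pr s) /=.
case: (eqVneq b a) => [->|ne] /=.
  by rewrite add0n [in LHS]IH mulgA -mpC !mulgA.
have hab : e a * e b = m * (e b * e a).
  by have := anti (ltac:(by rewrite eq_sym) : a != b) ; rewrite /gmul.
rewrite mulgA hab -!mulgA [in LHS]IH add1n mpS.
set c := count _ s; have hc := mpC c (e b).
rewrite !mulgA; congr (_ * _); congr (_ * _); by rewrite -!mulgA hc.
Qed.

Lemma sq_Pr t s : uniq s -> (forall i, e i * e i = mp t) ->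
  Pr s * Pr s = mp ('C(size s, 2) + t * size s).
Proof.
move=> us hsq; elim: s us => [|a s IH] /=.
  by rewrite /Pr big_nil mulg1 muln0 /mp /=.
move=> /andP [as_ us]; rewrite /Pr big_cons -/(Pr s).
have ca : count (fun b => b != a) s = size s.
  rewrite -(count_predT s); apply: eq_in_count => b bs /=.
  by apply/negP => /eqP ba; move: as_; rewrite -ba bs.
have h : Pr s * e a = mp (size s) * (e a * Pr s) by rewrite anti_C ca mpK.
rewrite -mulgA (mulgA (Pr s)) h -!mulgA IH // !mulgA -(mpC (size s) (e a)) -(mulgA (mp (size s))) hsq -!mpD.
rewrite binS bin1 mulnS; congr (mp _). set x1 := 'C(_,_). set x2 := size s. set x3 := (t * x2)%N. lia.
Qed.


Lemma size_U : size U = n.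
Proof. by rewrite /index_enum unlock -enumT size_enum_ord. Qed.

Lemma emon_sq t (p : {ffun 'I_n -> bool}) : (forall i, e i * e i = mp t) ->
  emon e p * emon e p = mp ('C(count p U, 2) + t * count p U).
Proof.
move=> hsq; rewrite emonE PL_Pr (@sq_Pr t) ?size_filter //.
exact: filter_uniq (index_enum_uniq _).
Qed.

Lemma mp_eqm k : (mp k == m) = odd k.
Proof.
rewrite /mp; case: (odd k); first by rewrite eqxx.
by apply/eqP => h; apply: (sg_neq1 sg); rewrite -h.
Qed.

Lemma num_negE t : (forall i, e i * e i = mp t) ->
  num_neg m e = #|[set p : {ffun 'I_n -> bool} |
                   odd ('C(count p U, 2) + t * count p U)]|.
Proof.
move=> hsq; apply: eq_card => p; rewrite !inE.
by rewrite /gmul (@emon_sq t) // mp_eqm.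
Qed.

Definition E := Pr U.

Lemma E_anti i : ~~ odd n -> e i * E = m * (E * e i).
Proof.
move=> ev; rewrite /E anti_C; congr (_ * _).
have h := count_predC (pred1 i) U.
have h1 : count (pred1 i) U = 1%N.
  by rewrite (count_uniq_mem _ (index_enum_uniq _)) mem_index_enum.
have h2 : count (predC (pred1 i)) U = count (fun b => b != i) U by apply: eq_count.
rewrite size_U h1 h2 in h.
move: (congr1 odd h); rewrite add1n /= (negPf ev) => /negbFE oc.
by rewrite /mp oc.
Qed.

Lemma bin2_4 : (4 %| n)%N -> ~~ odd 'C(n, 2).
Proof.
case/dvdnP=> q hq.
have h : (n * n.-1 = 2 * (q * 2 * n.-1))%N by rewrite {1}hq; nia.
by rewrite bin2 h mul2n doubleK !oddM /= andbF.
Qed.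

Lemma EE t : (4 %| n)%N -> (forall i, e i * e i = mp t) -> E * E = 1.
Proof.
move=> h4 hsq; rewrite /E (@sq_Pr t) ?index_enum_uniq // size_U /mp oddD.
have ev : ~~ odd n by move: h4 => /dvdnP [q ->]; rewrite oddM andbF.
by rewrite (negPf (bin2_4 h4)) oddM (negPf ev) andbF.
Qed.

Definition ff i := E * e i.

Lemma f_mul i j : ~~ odd n -> E * E = 1 -> ff i * ff j = m * (e i * e j).
Proof.
move=> ev hE; rewrite /ff mulgA -(mulgA E (e i) E) E_anti //.
rewrite !mulgA -(mC E) -(mulgA m E E) hE mulg1 -mulgA //.
Qed.

Lemma rep_E : rep E (fun _ => true).
Proof. by rewrite /rep PL_Pr filter_predT; apply: sim_refl. Qed.

Lemma rep_f i : rep (ff i) (fun j => true (+) (j == i)).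
Proof. exact: rep_mul rep_E (rep_e i). Qed.

Lemma rep_fprod (p : 'I_n -> bool) s : uniq s ->
  rep (\big[@mul G/1]_(i <- s) (if p i then ff i else 1))
      (fun j => odd (count p s) (+) (p j && (j \in s))).
Proof.
elim: s => [|b s IH] /=.
  move=> _; rewrite big_nil; apply: (@rep_ext _ (fun _ => false)).
    by move=> j; rewrite in_nil andbF.
  by rewrite /rep PL_false; apply: sim_refl.
move=> /andP [bs us]; rewrite big_cons.
case pb: (p b).
  apply: rep_ext (rep_mul (rep_f b) (IH us)) => j.
  rewrite inE; case: (eqVneq j b) => [->|ne] /=.
    by rewrite (negPf bs) pb andbF andbT add0n addbF addbT negbK.
  by rewrite add0n addNb.
rewrite mul1g; apply: rep_ext (IH us) => j.
rewrite inE; case: (eqVneq j b) => [->|ne] /=.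
  by rewrite pb.
by [].
Qed.


Lemma count_compl (q : 'I_n -> bool) : ~~ odd n ->
  odd (count (fun j => ~~ q j) U) = odd (count q U).
Proof.
move=> ev; have h := count_predC q U; rewrite size_U in h.
have h2 : count (predC q) U = count (fun j => ~~ q j) U by apply: eq_count.
move: (congr1 odd h); rewrite oddD (negPf ev) h2.
by case: (odd (count q U)); case: (odd (count _ U)).
Qed.

Lemma replacement t : (4 %| n)%N -> (forall i, e i * e i = mp t) -> basic m e ->
  [/\ basic m ff, anticommutative m ff, (forall i, ff i * ff i = mp t.+1)
    & same_generated m e ff].
Proof.
move=> h4 hsq be.
have ev : ~~ odd n by move: h4 => /dvdnP [q ->]; rewrite oddM andbF.
have hE := EE h4 hsq.
have repF : forall p : {ffun 'I_n -> bool},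
    rep (emon ff p) (fun j => odd (count p U) (+) p j).
  move=> p; apply: rep_ext (rep_fprod p (index_enum_uniq _)) => j.
  by rewrite mem_index_enum andbT.
split.
- move=> p p0.
  pose gg := [ffun j => odd (count p U) (+) p j].
  have hs : sim (emon ff p) (emon e gg).
    apply: sim_trans (repF p) _; rewrite emonE; apply: PL_sim_ext => j.
    by rewrite ffunE.
  have gg0 : gg != [ffun=> false].
    apply/eqP => /ffunP hg; move/eqP: p0; apply.
    case oc: (odd (count p U)).
      have pt : forall j, p j = true.
        move=> j; have := hg j; rewrite !ffunE oc /=.
        by move/negbFE.
      have hc : count p U = size U.
        by rewrite -(count_predT U); apply: eq_count => j; rewrite pt.
      by rewrite hc size_U (negPf ev) in oc.
    apply/ffunP => j; have := hg j; rewrite !ffunE oc /=.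
    by [].
  have [h1 h2] := be gg gg0.
  exact: sim_not01 hs h1 h2.
- move=> i j ij; rewrite /gmul !f_mul //.
  by have := anti ij; rewrite /gmul => ->.
- by move=> i; rewrite f_mul // hsq mpS.
move=> x; split.
  case=> q hq; have hq' : sim x (PL U q) := hq.
  pose c := odd (count q U).
  pose p : {ffun 'I_n -> bool} := if c then [ffun j => ~~ q j] else q.
  exists p; apply: sim_trans hq' _; apply: sim_sym; apply: sim_trans (repF p) _.
  apply: PL_sim_ext => j; rewrite /p; case hc: c.
    have -> : count [ffun j => ~~ q j] U = count (fun j => ~~ q j) U.
      by apply: eq_count => k; rewrite ffunE.
    by rewrite count_compl // -/c hc ffunE /= negbK.
  by rewrite -/c hc.
case=> p hp; have hp' : sim x (emon ff p) := hp.
exists [ffun j => odd (count p U) (+) p j].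
apply: sim_trans hp' _; apply: sim_trans (repF p) _; rewrite emonE.
by apply: PL_sim_ext => j; rewrite ffunE.
Qed.

End Grp.

Definition T (P : pred nat) n := (\sum_(k < n.+1 | P k) 'C(n, k))%N.

Lemma T_ext P P' n : (forall k, P k = P' k) -> T P n = T P' n.
Proof. by move=> h; apply: eq_bigl => k; rewrite h. Qed.

Lemma T_mk P n : T P n = (\sum_(k < n.+1) (if P k then 'C(n, k) else 0))%N.
Proof. by rewrite /T big_mkcond. Qed.

Lemma ifD (b : bool) x y : (if b then x + y else 0) = (if b then x else 0) + (if b then y else 0).
Proof. by case: b. Qed.

Lemma T_S P n : T P n.+1 = T P n + T (fun k => P k.+1) n.
Proof.
rewrite !T_mk big_ord_recl /=.
under eq_bigr => i _ do rewrite /bump leq0n add1n binS.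
under eq_bigr => i _ do rewrite ifD.
rewrite big_split /= addnA; congr (_ + _).
rewrite [X in _ + X = _]big_ord_recr /= (bin_small (ltnSn n)) if_same addn0.
rewrite [in RHS]big_ord_recl /= !bin0.
by congr (_ + _); apply: eq_bigr => i _; rewrite /bump leq0n add1n.
Qed.

Lemma T_C P n : T P n + T (predC P) n = 2 ^ n.
Proof.
rewrite !T_mk -big_split /=.
have -> : 2 ^ n = (1 + 1) ^ n by [].
rewrite expnDn; apply: eq_bigr => i _.
by rewrite !exp1n !muln1; case: (P i); rewrite ?addn0.
Qed.

Lemma card_sets n (P : pred nat) :
  #|[set A : {set 'I_n} | P #|A| ]| = T P n.
Proof.
rewrite -sum1_card /T.
rewrite (partition_big (fun A : {set 'I_n} => inord #|A| : 'I_n.+1) (fun k : 'I_n.+1 => P k)).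
  apply: eq_bigr => k Pk.
  have := card_draws 'I_n k; rewrite card_ord => <-; rewrite -sum1_card.
  apply: eq_bigl => A; rewrite !inE.
  have hA : #|A| <= n by rewrite -[X in _ <= X](card_ord n) max_card.
  apply/andP/eqP => [[_ /eqP <-]|hk]; first by rewrite inordK.
  split; first by rewrite hk.
  by apply/eqP/val_inj; rewrite /= inordK // hk.
move=> A; rewrite inE => PA.
have hA : #|A| <= n by rewrite -[X in _ <= X](card_ord n) max_card.
by rewrite inordK.
Qed.

Lemma card_count n (P : pred nat) :
  #|[set p : {ffun 'I_n -> bool} | P (count p (index_enum 'I_n))]| = T P n.
Proof.
rewrite -card_sets.
pose g (A : {set 'I_n}) := [ffun i => i \in A].
pose h (p : {ffun 'I_n -> bool}) := [set i | p i].
have gh : cancel h g by move=> p; apply/ffunP => i; rewrite ffunE inE.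
have hg : cancel g h by move=> A; apply/setP => i; rewrite inE ffunE.
have -> : [set p : {ffun 'I_n -> bool} | P (count p (index_enum 'I_n))]
        = g @: [set A : {set 'I_n} | P #|A|].
  rewrite (can2_imset_pre _ hg gh); apply/setP => p; rewrite !inE.
  by rewrite -size_filter deprecated_filter_index_enum cardsE cardE.
by rewrite card_imset //; apply: can_inj hg.
Qed.

Definition Q (t : nat) : pred nat := fun k => odd ('C(k, 2) + t * k).

Lemma ab_S n : T (Q 0) n.+1 = T (Q 0) n + T (Q 1) n.
Proof.
rewrite T_S; congr (_ + _); apply: T_ext => k.
by rewrite /Q binS bin1 !mul0n mul1n addn0.
Qed.

Lemma ba_S n : T (Q 1) n.+1 + T (Q 0) n = T (Q 1) n + 2 ^ n.
Proof.
rewrite T_S -addnA; congr (_ + _).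
rewrite -(T_C (Q 0) n) addnC; congr (_ + _); apply: T_ext => k.
rewrite /Q /= binS bin1 mul1n mul0n addn0 !oddD /=.
by case: (odd 'C(k, 2)); case: (odd k).
Qed.

Lemma T1 : T (Q 0) 1 = 0 /\ T (Q 1) 1 = 1.
Proof. by split; rewrite T_mk big_ord_recl big_ord1. Qed.

From Stdlib Require Import Reals Lra.
Local Open Scope R_scope.


Definition Uf (n : nat) := Rpower 2 (INR n / 2 - 1) * cos (INR n * PI / 4).
Definition Vf (n : nat) := Rpower 2 (INR n / 2 - 1) * sin (INR n * PI / 4).

Lemma sqrt2_ne : sqrt 2 <> 0.
Proof. apply: Rgt_not_eq; apply: sqrt_lt_R0; lra. Qed.

Lemma Rp_S n : Rpower 2 (INR (S n) / 2 - 1) = Rpower 2 (INR n / 2 - 1) * sqrt 2.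
Proof.
rewrite -Rpower_sqrt; last lra.
rewrite -Rpower_plus S_INR; f_equal; field.
Qed.

Lemma ang_S n : INR (S n) * PI / 4 = INR n * PI / 4 + PI / 4.
Proof. rewrite S_INR; field. Qed.

Lemma UV_S n : Uf (S n) = Uf n - Vf n /\ Vf (S n) = Uf n + Vf n.
Proof.
rewrite /Uf /Vf Rp_S ang_S cos_plus sin_plus cos_PI4 sin_PI4.
have h := sqrt2_ne.
split; field; exact h.
Qed.

Lemma UV_1 : Uf 1 = 1/2 /\ Vf 1 = 1/2.
Proof.
have e1 : INR 1 / 2 - 1 = - / 2 by simpl; field.
have e2 : INR 1 * PI / 4 = PI / 4 by simpl; field.
have hs := sqrt_sqrt 2 ltac:(lra).
rewrite /Uf /Vf e1 e2 Rpower_Ropp Rpower_sqrt; last lra.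
rewrite cos_PI4 sin_PI4.
have k : / sqrt 2 * (1 / sqrt 2) = 1/2.
  by rewrite /Rdiv Rmult_1_l -Rinv_mult hs Rmult_1_l.
by rewrite k.
Qed.

Lemma Rp_pos x : 0 < Rpower 2 x.
Proof. rewrite /Rpower; apply: exp_pos. Qed.

Lemma Vf0 n : Vf n = 0 <-> (4 %| n)%N.
Proof.
rewrite /Vf; split.
  move=> h.
  have hs : sin (INR n * PI / 4) = 0.
    have hp := Rp_pos (INR n / 2 - 1).
    by case: (Rmult_integral _ _ h) => // h'; lra.
  case: (sin_eq_0_0 _ hs) => k hk.
  have hpi := PI_neq0.
  have h4 : INR n = IZR (4 * k).
    rewrite mult_IZR.
    have : INR n * PI = 4 * IZR k * PI by rewrite Rmult_assoc -hk; field.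
    by move/(Rmult_eq_reg_r _ _ _) => ->.
  rewrite INR_IZR_INZ in h4; move/eq_IZR: h4 => h4.
  apply/dvdnP; exists (Z.to_nat k); lia.
case/dvdnP=> q ->.
have -> : INR (q * 4) * PI / 4 = IZR (Z.of_nat q) * PI.
  by rewrite -INR_IZR_INZ -multE mult_INR; simpl; field.
by rewrite sin_eq_0_1 ?Rmult_0_r //; exists (Z.of_nat q).
Qed.

Lemma INR_expn k : INR (expn 2 k) = (2 ^ k)%R.
Proof.
elim: k => [|k IH]; first by [].
by rewrite expnS -multE mult_INR IH /=.
Qed.

Lemma formula n :
  INR (T (Q 0) n.+1) = (2 ^ n - (Uf n.+1 + Vf n.+1))%R /\
  INR (T (Q 1) n.+1) = (2 ^ n - (Uf n.+1 - Vf n.+1))%R.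
Proof.
elim: n => [|n [IHa IHb]].
  have [h1 h2] := UV_1; have [t1 t2] := T1.
  by rewrite t1 t2 h1 h2 /=; split; lra.
have [hu hv] := UV_S n.+1.
have ea := ab_S n.+1.
have eb := ba_S n.+1.
have eb' := congr1 INR eb.
rewrite -!plusE !plus_INR INR_expn in eb'.
split.
  rewrite ea -plusE plus_INR IHa IHb hu hv /=; lra.
have -> : INR (T (Q 1) n.+2) = (INR (T (Q 1) n.+1) + 2 ^ n.+1 - INR (T (Q 0) n.+1))%R by lra.
rewrite IHa IHb hu hv /=; lra.
Qed.

Lemma num_neg_T (G : groupType) (m : G) n (e : 'I_n -> G) t :
  signed_group m -> anticommutative m e -> (forall i, mul (e i) (e i) = mp m t) ->
  num_neg m e = T (Q t) n.
Proof.
move=> sg an hsq; rewrite (@num_negE G m sg n e an t hsq) -card_count.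
by [].
Qed.

Lemma pos_mp (G : groupType) (m : G) n (e : 'I_n -> G) :
  positive_seq e -> forall i, mul (e i) (e i) = mp m 0.
Proof. by move=> h i; rewrite /mp /=; apply: h. Qed.

Lemma neg_mp (G : groupType) (m : G) n (e : 'I_n -> G) :
  negative_seq m e -> forall i, mul (e i) (e i) = mp m 1.
Proof. by move=> h i; rewrite /mp /=; apply: h. Qed.

Close Scope R_scope.
Unset Implicit Arguments.

Theorem proposition4p1 (n : nat) (hn : (1 <= n)%N) :
  (* (1) first half: s_- = s_+  <->  4 | n *)
  (forall (G1 : groupType) (m1 : G1) (e : 'I_n -> G1)
          (G2 : groupType) (m2 : G2) (f : 'I_n -> G2),
     signed_group m1 -> positive_seq e -> anticommutative m1 e -> basic m1 e ->
     signed_group m2 -> negative_seq m2 f -> anticommutative m2 f -> basic m2 f ->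
     (num_neg m2 f = num_neg m1 e <-> (4 %| n)%N))
  /\
  (* (1) second half: replacement by a pure anticommutative generator of the
     opposite signature *)
  ((4 %| n)%N ->
   forall (G : groupType) (m : G) (e : 'I_n -> G),
     signed_group m -> anticommutative m e -> basic m e ->
     (positive_seq e ->
        exists (k : nat) (f : 'I_k -> G),
          basic m f /\ anticommutative m f /\ negative_seq m f /\
          same_generated m e f)
     /\
     (negative_seq m e ->
        exists (k : nat) (f : 'I_k -> G),
          basic m f /\ anticommutative m f /\ positive_seq f /\
          same_generated m e f))
  /\
  (* (2) value of s_+ *)
  (forall (G : groupType) (m : G) (e : 'I_n -> G),
     signed_group m -> positive_seq e -> anticommutative m e -> basic m e ->
     INR (num_neg m e) =
       (2 ^ (n - 1) - Rpower 2 (INR n / 2 - 1) *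
          (cos (INR n * PI / 4) + sin (INR n * PI / 4)))%R)
  /\
  (* (2) value of s_- *)
  (forall (G : groupType) (m : G) (e : 'I_n -> G),
     signed_group m -> negative_seq m e -> anticommutative m e -> basic m e ->
     INR (num_neg m e) =
       (2 ^ (n - 1) - Rpower 2 (INR n / 2 - 1) *
          (cos (INR n * PI / 4) - sin (INR n * PI / 4)))%R).
Proof.
case: n hn => // n _.
have [fa fb] := formula n.
have hsub : (n.+1 - 1)%N = n by rewrite subn1.
split.
  move=> G1 m1 e G2 m2 f sg1 pe an1 _ sg2 nf an2 _.
  rewrite (num_neg_T sg1 an1 (pos_mp m1 pe)) (num_neg_T sg2 an2 (neg_mp nf)).
  rewrite -Vf0; split.
    by move=> h; have := congr1 INR h; rewrite fa fb; lra.
  by move=> h; apply: INR_eq; rewrite fa fb h; lra.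
split.
  move=> h4 G m e sg an be; split.
    move=> pe; have [b1 a1 s1 g1] := replacement sg an h4 (pos_mp m pe) be.
    by exists n.+1, (ff e); split=> //; split=> //; split=> // i.
  move=> ne; have [b1 a1 s1 g1] := replacement sg an h4 (neg_mp ne) be.
  by exists n.+1, (ff e); split=> //; split=> //; split=> // i.
split.
  move=> G m e sg pe an _; rewrite (num_neg_T sg an (pos_mp m pe)) fa hsub /Uf /Vf; ring.
move=> G m e sg ne an _; rewrite (num_neg_T sg an (neg_mp ne)) fb hsub /Uf /Vf; ring.
Qed.
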